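(* Consider an infinite balls-in-bins process with $d\ge2$ labeled bins: at each time $t=1,2,\ldots$ one ball is placed into a bin chosen uniformly at random from $\{1,\ldots,d\}$, independently over time, and $N^{(i)}_t$ denotes the number of balls in bin $i$ at time $t$. For every fixed $K\in\mathbb{N}$ there is a constant $C_{K,d}$ (independent of $t$) such that for all $t\ge1$, $$\Pr\big(\exists\, i\neq j:\ |N^{(i)}_t-N^{(j)}_t|\le K\big)\le\frac{C_{K,d}}{\sqrt t}.$$ *)

(* Defs.v *)
From HB Require Import structures.
From mathcomp Require Import all_boot all_order all_algebra.
From mathcomp Require Import reals.
Set Implicit Arguments. Unset Strict Implicit. Unset Printing Implicit Defensive.
Import Order.TTheory GRing.Theory Num.Theory.

(* The first t steps of the balls-in-bins process with d bins:
   w s = bin chosen at time s+1 (s : 'I_t). Under the process, the law of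
   these t choices is uniform on {ffun 'I_t -> 'I_d}. *)

Definition bin_count (d t : nat) (w : {ffun 'I_t -> 'I_d}) (i : 'I_d) : nat :=
  #|[set s : 'I_t | w s == i]|.

Definition close_pair_event (d t K : nat) : {set {ffun 'I_t -> 'I_d}} :=
  [set w | [exists i : 'I_d, exists j : 'I_d,
     (i != j) && (absz (Posz (bin_count w i) - Posz (bin_count w j))%R <= K)%N]].

Definition unif_prob (R : numFieldType) (d t : nat)
    (A : {set {ffun 'I_t -> 'I_d}}) : R :=
  (#|A|%:R) / ((d ^ t)%N%:R).

(* Main.v *)
Require Import Defs.
From HB Require Import structures.
From mathcomp Require Import all_boot all_order all_algebra.
From mathcomp Require Import reals.
From mathcomp Require Import zify ring lra.
Import Order.TTheory GRing.Theory Num.Theory.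
Set Implicit Arguments. Unset Strict Implicit. Unset Printing Implicit Defensive.
Lemma bin_up k a : (2 * a + 1 <= k)%N -> ('C(k, a) <= 'C(k, a.+1))%N.
Proof.
move=> h. have := mul_bin_left k a.
have hk : (a.+1 <= k - a)%N by lia.
move=> e. rewrite -(leq_pmul2l (ltn0Sn a)) e. by rewrite leq_mul2r hk orbT.
Qed.

Lemma bin_le_half_aux k n : forall a, (a + n = k./2)%N -> ('C(k, a) <= 'C(k, k./2))%N.
Proof.
elim: n => [|n IH] a h; first by rewrite -h addn0.
apply: leq_trans (IH a.+1 _); last by lia.
apply: bin_up. have := odd_double_half k. lia.
Qed.

Lemma bin_le_half k a : ('C(k, a) <= 'C(k, k./2))%N.
Proof.
have hh := odd_double_half k.
case: (leqP a k./2) => h1.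
  apply: (@bin_le_half_aux k (k./2 - a)); lia.
case: (leqP a k) => h2; last by rewrite bin_small.
rewrite -bin_sub //. apply: (@bin_le_half_aux k (k./2 - (k - a))). lia.
Qed.

Lemma central_step n :
  ((n.+1) * 'C(n.*2.+2, n.+1) = 2 * (n.*2.+1) * 'C(n.*2, n))%N.
Proof.
have e1 := mul_bin_diag n.*2.+1 n. rewrite /= in e1.
have e2 : 'C(n.*2.+1, n.+1) = 'C(n.*2.+1, n).
  rewrite -bin_sub; last by lia. congr binomial; lia.
have e3 : 'C(n.*2.+2, n.+1) = 2 * 'C(n.*2.+1, n.+1) by rewrite binS e2; lia.
rewrite e3 mulnCA -e1; lia.
Qed.

Lemma central_bound n : ('C(n.*2, n) ^ 2 * (3 * n + 1) <= 16 ^ n)%N.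
Proof.
elim: n => [|n IH]; first by rewrite bin0.
have e := central_step n.
set x := 'C(n.*2, n) in IH e *. set y := 'C(n.*2.+2, n.+1) in e *.
have : ((n.+1)^2 * (y ^ 2 * (3 * n.+1 + 1)) <= (n.+1)^2 * 16 ^ n.+1)%N.
  have -> : ((n.+1)^2 * (y ^ 2 * (3 * n.+1 + 1)) = (4 * (n.*2.+1)^2 * (3*n+4)) * x^2)%N.
    have -> : ((n.+1)^2 * (y ^ 2 * (3 * n.+1 + 1)) = ((n.+1) * y)^2 * (3*n+4))%N by rewrite expnMn; ring.
    rewrite e !expnMn; ring.
  apply: (@leq_trans (16 * (n.+1)^2 * (x^2 * (3*n+1)))).
    have h : (4 * n.*2.+1 ^ 2 * (3 * n + 4) <= 16 * n.+1 ^ 2 * (3 * n + 1))%N by nia.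
    have -> : (16 * (n.+1)^2 * (x^2 * (3*n+1)) = (16 * n.+1 ^ 2 * (3 * n + 1)) * x^2)%N by ring.
    by rewrite leq_mul2r h orbT.
  have -> : ((n.+1)^2 * 16 ^ n.+1 = 16 * (n.+1)^2 * 16 ^ n)%N by rewrite (expnS 16 n) mulnCA mulnA.
  by rewrite leq_mul2l IH orbT.
move=> H. by rewrite -(@leq_pmul2l ((n.+1)^2)) // expn_gt0.
Qed.

Lemma cb_bound k : ('C(k, k./2) ^ 2 * k.+1 <= 4 ^ k)%N.
Proof.
have hh := odd_double_half k.
case ho: (odd k) hh => /= hh.
- set n := k./2 in hh *. 
  have e := central_step n.
  have e2 : 'C(n.*2.+2, n.+1) = 2 * 'C(n.*2.+1, n).
    rewrite binS -bin_sub; last by lia.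
    have -> : (n.*2.+1 - n.+1 = n)%N by lia. lia.
  have cb := central_bound n.+1. rewrite doubleS e2 in cb.
  rewrite -hh add1n.
  have h4 : (4 ^ n.*2.+1 * 4 = 16 ^ n.+1)%N.
    by rewrite -expnSr -doubleS -mul2n expnM.
  rewrite -(leq_pmul2r (isT : 0 < 4)%N) h4. apply: leq_trans cb. 
  rewrite expnMn. nia.
- rewrite add0n in hh. set n := k./2 in hh *. rewrite -hh.
  have cb := central_bound n.
  have -> : (4 ^ n.*2 = 16 ^ n)%N by rewrite -mul2n expnM.
  apply: leq_trans cb. nia.
Qed.
Lemma sum_interval N lo hi :
  (\sum_(a < N) ((lo <= a) && (a <= hi)) = minn N hi.+1 - lo)%N.
Proof.
elim: N => [|N IH]; first by rewrite big_ord0 min0n.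
rewrite big_ord_recr /= IH.
case: (leqP lo N) => h1; case: (leqP N hi) => h2 /=; lia.
Qed.

Lemma count_a k K N :
  (\sum_(a < N) ((k <= a.*2 + K) && (a.*2 <= k + K)) <= K.+2)%N.
Proof.
apply: (@leq_trans (\sum_(a < N) (((k - K) %/ 2 <= a) && (a <= (k + K) %/ 2)))).
  apply: leq_sum => a _.
  case h: ((k <= a.*2 + K) && (a.*2 <= k + K)) => //=.
  move/andP: h => [h1 h2].
  have -> : ((k - K) %/ 2 <= a) && (a <= (k + K) %/ 2) by apply/andP; split; lia.
  by [].
rewrite sum_interval. lia.
Qed.

Lemma sum_pick N (v : nat) (g : nat -> nat) :
  (\sum_(n < N) ((n : nat) == v) * g n = (v < N) * g v)%N.
Proof.
elim: N => [|N IH]; first by rewrite big_ord0.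
rewrite big_ord_recr /= IH.
change ((v < N) * g v + (N == v) * g N = (v < N.+1) * g v)%N.
case: (ltngtP v N) => h.
- rewrite (_ : (v < N.+1) = true) /=; [lia|lia].
- rewrite (_ : (v < N.+1) = false) /=; [lia|lia].
- subst v. by rewrite ltnSn /= mul1n.
Qed.

Lemma bc_sum d t (w : {ffun 'I_t -> 'I_d}) i :
  bin_count w i = (\sum_(s < t) (w s == i))%N.
Proof.
rewrite /bin_count -sum1_card big_mkcond /=; apply: eq_bigr => s _.
by rewrite inE; case: (w s == i).
Qed.

Definition ew d (i j : 'I_d) (c : 'I_d) : nat :=
  if c == i then 2 else if c == j then 0 else 1.

Definition sw d t (i j : 'I_d) (w : {ffun 'I_t -> 'I_d}) : nat :=
  \sum_(s < t) ew i j (w s).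

Lemma sw_id d t (i j : 'I_d) (w : {ffun 'I_t -> 'I_d}) : i != j ->
  (sw i j w + bin_count w j = t + bin_count w i)%N.
Proof.
move=> hij. rewrite !bc_sum /sw -big_split /=.
rewrite -[X in (_ = X + _)%N](card_ord t) -sum1_card -big_split /=. apply: eq_bigr => s _. rewrite /ew. move: (w s) => c.
case e1: (c == i); case e2: (c == j) => //=.
move/eqP: e1 => e1; move/eqP: e2 => e2. by rewrite -e1 -e2 eqxx in hij.
Qed.

Lemma sw_le d t (i j : 'I_d) (w : {ffun 'I_t -> 'I_d}) : (sw i j w <= t.*2)%N.
Proof.
rewrite /sw -muln2 -[t in (t * 2)%N]card_ord -sum_nat_const.
apply: leq_sum => s _; rewrite /ew. by case: ifP => //; case: ifP.
Qed.

Lemma split3 (M : nmodType) d (i j : 'I_d) (F : 'I_d -> M) : i != j ->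
  (\sum_c F c = F i + F j + \sum_(c | (c != i) && (c != j)) F c)%R.
Proof.
move=> hij. rewrite (bigD1 i) //= (bigD1 j) /=; last by rewrite eq_sym.
by rewrite addrA.
Qed.

Lemma split3n d (i j : 'I_d) (F : 'I_d -> nat) : i != j ->
  (\sum_c F c = F i + F j + \sum_(c | (c != i) && (c != j)) F c)%N.
Proof.
move=> hij. rewrite (bigD1 i) //= (bigD1 j) /=; last by rewrite eq_sym.
by rewrite addnA.
Qed.

Definition c0 d (i j : 'I_d) := #|[pred c : 'I_d | (c != i) && (c != j)]|.

Lemma c0_eq d (i j : 'I_d) : i != j -> (c0 i j + 2 = d)%N.
Proof.
move=> hij. have := split3n (fun _ => 1%N) hij.
rewrite sum1_card sum1_card /c0 => e. rewrite -[X in (_ = X)%N](card_ord d) e addnC. by [].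
Qed.
Section Poly.
Local Open Scope ring_scope.

Lemma genf (R : comNzRingType) d t (i j : 'I_d) :
  \sum_(w : {ffun 'I_t -> 'I_d}) ('X^(sw i j w) : {poly R}) =
  (\sum_(c : 'I_d) 'X^(ew i j c)) ^+ t.
Proof.
under eq_bigr do rewrite /sw expr_sum.
by rewrite -[in RHS](card_ord t) -prodr_const bigA_distr_bigA /=.
Qed.

Lemma Qform (R : comNzRingType) d (i j : 'I_d) : i != j ->
  \sum_(c : 'I_d) ('X^(ew i j c) : {poly R}) = 'X *+ c0 i j + ('X^2 + 1).
Proof.
move=> hij. rewrite (split3 _ hij) /ew eqxx eq_sym (negbTE hij) eqxx expr0.
rewrite (eq_bigr (fun _ => 'X)); last first.
  by move=> c /andP[/negbTE -> /negbTE ->]; rewrite expr1.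
rewrite sumr_const /c0. rewrite addrC. congr (_ + _).
Qed.

Lemma expand (R : comNzRingType) t (c : nat) :
  ('X *+ c + ('X^2 + 1)) ^+ t =
  \sum_(k < t.+1) \sum_(a < k.+1)
     ('X^(a.*2 + (t - k)) : {poly R}) *+ ('C(t, k) * c ^ (t - k) * 'C(k, a))%N.
Proof.
rewrite exprDn. apply: eq_bigr => k _.
rewrite exprMn_n exprD1n mulr_sumr -sumrMnl. apply: eq_bigr => a _.
rewrite mulrnAl mulrnAr -exprM -exprD -!mulrnA.
congr (_ *+ _); first by congr (_ ^+ _); lia.
by rewrite mulnC [(c ^ _ * _)%N]mulnC.
Qed.

Lemma coef_identity d t (i j : 'I_d) (n : nat) : i != j ->
  (\sum_(w : {ffun 'I_t -> 'I_d}) (n == sw i j w))%N =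
  (\sum_(k < t.+1) \sum_(a < k.+1)
     (n == a.*2 + (t - k)) * ('C(t, k) * c0 i j ^ (t - k) * 'C(k, a)))%N.
Proof.
move=> hij.
have h := congr1 (fun p : {poly int} => p`_n) (genf int t i j).
rewrite /= (Qform _ hij) expand !coef_sum in h.
apply/eqP; rewrite -(@eqr_nat int) !natr_sum; apply/eqP.
rewrite (eq_bigr (fun w => ('X^(sw i j w) : {poly int})`_n)); last first.
  by move=> w _; rewrite coefXn eq_sym.
rewrite h. apply: eq_bigr => k _. rewrite natr_sum coef_sum. apply: eq_bigr => a _.
by rewrite coefMn coefXn natrM mulr_natr.
Qed.

End Poly.
Definition Aij d t K (i j : 'I_d) : {set {ffun 'I_t -> 'I_d}} :=
  [set w | (i != j) &&
     (absz (Posz (bin_count w i) - Posz (bin_count w j))%R <= K)%N].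

Definition fK t K n : nat := ((t <= n + K) && (n <= t + K))%N.

Lemma count_pair d t K (i j : 'I_d) : i != j ->
  (#|Aij t K i j| <=
   K.+2 * \sum_(k < t.+1) 'C(t, k) * c0 i j ^ (t - k) * 'C(k, k./2))%N.
Proof.
move=> hij.
have e1 : #|Aij t K i j| = (\sum_(w : {ffun 'I_t -> 'I_d}) fK t K (sw i j w))%N.
  rewrite -sum1_card big_mkcond /=. apply: eq_bigr => w _.
  rewrite inE hij /= /fK. have := sw_id w hij.
  move: (sw i j w) (bin_count w i) (bin_count w j) => s a b h.
  have E : (absz (Posz a - Posz b)%R <= K)%N = ((t <= s + K) && (s <= t + K))%N.
    apply/idP/andP => [H|[H1 H2]]; [split; lia | lia].
  by rewrite E; case: (_ && _).
have e2 : forall w : {ffun 'I_t -> 'I_d}, fK t K (sw i j w) =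
    (\sum_(n < t.*2.+1) ((n : nat) == sw i j w) * fK t K n)%N.
  move=> w0. rewrite sum_pick. by rewrite ltnS sw_le mul1n.
rewrite e1 (eq_bigr _ (fun w _ => e2 w)) exchange_big /=.
rewrite (eq_bigr (fun n : 'I_t.*2.+1 =>
   (\sum_(k < t.+1) \sum_(a < k.+1)
     ('C(t, k) * c0 i j ^ (t - k) * 'C(k, a)) *
       (((n : nat) == a.*2 + (t - k)) * fK t K n))%N)); last first.
  move=> n _. rewrite -big_distrl /= coef_identity // big_distrl /=.
  apply: eq_bigr => k _. rewrite big_distrl /=. apply: eq_bigr => a _.
  by rewrite [X in X * _]mulnC -mulnA.
rewrite [X in (X <= _)%N]exchange_big big_distrr /=. apply: leq_sum => k _.
rewrite [X in (X <= _)%N]exchange_big /=.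
apply: (@leq_trans (\sum_(a < k.+1) ('C(t, k) * c0 i j ^ (t - k) * 'C(k, k./2)) *
                      ((k <= a.*2 + K) && (a.*2 <= k + K)))).
  apply: leq_sum => a _. rewrite -big_distrr /= sum_pick.
  apply: leq_mul; first by rewrite leq_mul2l bin_le_half orbT.
  have hk : (k < t.+1)%N by [].
  rewrite /fK.
  have -> : ((t <= a.*2 + (t - k) + K) && (a.*2 + (t - k) <= t + K))%N =
            ((k <= a.*2 + K) && (a.*2 <= k + K))%N.
    apply/andP/andP => [[H1 H2]|[H1 H2]]; split; lia.
  by case: (a.*2 + (t - k) < t.*2.+1)%N; rewrite ?mul1n ?mul0n.
rewrite -big_distrr /= mulnC. by apply: leq_mul => //; apply: count_a.
Qed.
Lemma card_sum (T : finType) (A : {set T}) : #|A| = (\sum_(x : T) (x \in A : nat))%N.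
Proof. rewrite -sum1_card big_mkcond; apply: eq_bigr => x _; by case: (x \in A). Qed.

Lemma union_bound d t K :
  (#|close_pair_event d t K| <= \sum_(i : 'I_d) \sum_(j : 'I_d) #|Aij t K i j|)%N.
Proof.
have E : (\sum_(i : 'I_d) \sum_(j : 'I_d) #|Aij t K i j| =
   \sum_(w : {ffun 'I_t -> 'I_d}) \sum_(i : 'I_d) \sum_(j : 'I_d) (w \in Aij t K i j : nat))%N.
  rewrite [in RHS]exchange_big /=. apply: eq_bigr => i _.
  rewrite [in RHS]exchange_big /=. apply: eq_bigr => j _.
  by rewrite card_sum.
rewrite E card_sum. apply: leq_sum => w _.
case hw: (w \in close_pair_event d t K) => //.
rewrite inE in hw. case/existsP: hw => i /existsP [j hij].
rewrite (bigD1 i) //= (bigD1 j) //= -addnA.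
by rewrite inE hij.
Qed.

Local Open Scope ring_scope.

Lemma am_gm (R : realFieldType) (x y s M : R) :
  0 <= x -> 0 < y -> 0 < s -> 0 < M -> M * x ^+ 2 <= y ^+ 2 ->
  x <= y * (s / M) / 2 + y / s / 2.
Proof.
move=> hx hy hs hM h.
have key : 0 <= y * (y * (s ^+ 2 + M) - 2 * x * s * M).
  have : 0 <= M * (x * s - y) ^+ 2 by apply: mulr_ge0; [lra| apply: sqr_ge0].
  have h2 : 0 <= s ^+ 2 * (y ^+ 2 - M * x ^+ 2) by apply: mulr_ge0; [apply: sqr_ge0 | lra].
  move=> h1. 
  have -> : y * (y * (s ^+ 2 + M) - 2 * x * s * M) =
            M * (x * s - y) ^+ 2 + s ^+ 2 * (y ^+ 2 - M * x ^+ 2) by ring.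
  by apply: addr_ge0.
have key2 : 0 <= y * (s ^+ 2 + M) - 2 * x * s * M.
  by rewrite (pmulr_rge0 _ hy) in key.
have -> : y * (s / M) / 2 + y / s / 2 = (y * (s ^+ 2 + M)) / (2 * s * M).
  by field; apply/andP; split; apply/lt0r_neq0 => //; lra.
rewrite ler_pdivlMr; last by rewrite !mulr_gt0.
lra.
Qed.
Local Open Scope nat_scope.
Lemma binsum_eq c t : \sum_(k < t.+1) 'C(t, k) * c ^ (t - k) * 2 ^ k = (c + 2) ^ t.
Proof. rewrite expnDn; apply: eq_bigr => k _; by rewrite mulnA. Qed.

Lemma binsum_le c t :
  2 * \sum_(k < t.+1) 'C(t.+1, k.+1) * c ^ (t - k) * 2 ^ k <= (c + 2) ^ t.+1.
Proof.
rewrite big_distrr /= expnDn big_ord_recl /=.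
rewrite [X in _ <= _ + X](eq_bigr (fun k : 'I_t.+1 => 2 * ('C(t.+1, k.+1) * c ^ (t - k) * 2 ^ k))).
  by apply: leq_addl.
move=> k _. rewrite /bump /= add1n subSS expnS. lia.
Qed.

Local Close Scope nat_scope.
Local Open Scope ring_scope.

Lemma pair_real (R : realType) d t K (i j : 'I_d) : i != j -> (1 <= t)%N ->
  (#|Aij t K i j|%:R : R) <= (K.+2)%:R * ((d ^ t.+1)%N%:R / Num.sqrt (t%:R)).
Proof.
move=> hij ht.
set s := Num.sqrt (t%:R : R).
have tpos : (0 : R) < t%:R by rewrite ltr0n.
have spos : 0 < s by rewrite sqrtr_gt0.
have s2 : s ^+ 2 = t%:R by rewrite sqr_sqrtr // ltW.
set c := c0 i j.
have hd : (c + 2 = d)%N by apply: c0_eq.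
set T1 : R := (t.+1)%:R.
have T1pos : 0 < T1 by rewrite ltr0n.
apply: le_trans (_ : (K.+2)%:R * (\sum_(k < t.+1) 'C(t, k) * c ^ (t - k) * 'C(k, k./2))%N%:R <= _).
  by rewrite -natrM ler_nat count_pair.
rewrite ler_wpM2l //.
pose a (k : nat) : R := ('C(t.+1, k.+1) * c ^ (t - k) * 2 ^ k)%N%:R.
pose b (k : nat) : R := ('C(t, k) * c ^ (t - k) * 2 ^ k)%N%:R.
have term : forall k : 'I_t.+1,
    (('C(t, k) * c ^ (t - k) * 'C(k, k./2))%N%:R : R) <=
    a k * (s / T1) / 2 + b k / s / 2.
  move=> k.
  have hx := am_gm (x := ('C(k, k./2))%:R) (y := (2 ^ k)%N%:R) (s := s) (M := (k.+1)%:R).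
  have hk := cb_bound k.
  have h5 : (k.+1)%:R * ('C(k, k./2))%:R ^+ 2 <= ((2 ^ k)%N%:R : R) ^+ 2.
    rewrite -!natrX -natrM ler_nat.
    have -> : ((2 ^ k) ^ 2 = 4 ^ k)%N by rewrite -expnM mulnC expnM.
    by rewrite mulnC.
  have h2k : (0 : R) < (2 ^ k)%N%:R by rewrite ltr0n expn_gt0.
  have H := hx (ler0n _ _) h2k spos (ltr0Sn _ _) h5.
  set al : R := ('C(t, k) * c ^ (t - k))%N%:R.
  set be : R := ('C(t.+1, k.+1) * c ^ (t - k))%N%:R.
  have rel : al * T1 = (k.+1)%:R * be.
    rewrite /al /be /T1 -!natrM; congr (_%:R).
    have := mul_bin_diag t.+1 k. rewrite /=. by move=> e; rewrite mulnC mulnA e mulnA.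
  have -> : (('C(t, k) * c ^ (t - k) * 'C(k, k./2))%N%:R : R) = al * ('C(k, k./2))%:R.
    by rewrite /al natrM.
  have -> : a k = be * (2 ^ k)%N%:R by rewrite /a /be natrM.
  have -> : b k = al * (2 ^ k)%N%:R by rewrite /b /al natrM.
  have alge0 : 0 <= al by rewrite ler0n.
  apply: le_trans (ler_wpM2l alge0 H) _.
  have Mpos : (0 : R) < (k.+1)%:R by rewrite ltr0n.
  have -> : al = (k.+1)%:R * be / T1.
    by rewrite -rel mulrK // unitfE lt0r_neq0.
  rewrite le_eqVlt; apply/orP; left; apply/eqP. field.
  apply/and3P; split; apply: lt0r_neq0 => //;
    [have := ler0n R t | have := ler0n R k]; lra.
rewrite natr_sum. apply: le_trans (ler_sum _ (fun k _ => term k)) _.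
rewrite big_split /= -!mulr_suml.
have Sa : \sum_(k < t.+1) a k <= (d ^ t.+1)%N%:R / 2.
  rewrite ler_pdivlMr // -natr_sum -[2]/(2%:R) -natrM ler_nat mulnC -hd.
  exact: binsum_le.
have Sb : \sum_(k < t.+1) b k = (d ^ t)%N%:R.
  by rewrite -natr_sum -hd binsum_eq.
have hsT : s / T1 <= s^-1.
  rewrite -subr_ge0.
  have -> : s^-1 - s / T1 = (T1 - s ^+ 2) / (s * T1).
    field. apply/andP; split; apply: lt0r_neq0 => //.
    have := ler0n R t; lra.
  apply: divr_ge0; last by rewrite mulr_ge0 // ltW.
  by rewrite s2 /T1 subr_ge0 ler_nat.
have Age0 : 0 <= \sum_(k < t.+1) a k by apply: sumr_ge0 => k _; rewrite ler0n.
have hdt : ((d ^ t)%N%:R : R) <= (d ^ t.+1)%N%:R.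
  rewrite ler_nat expnS leq_pmull //. by rewrite -hd addn2.
set A := \sum_(k < t.+1) a k in Sa Age0 *.
set B := \sum_(k < t.+1) b k in Sb *.
set D1 := ((d ^ t.+1)%N%:R : R) in Sa hdt *.
set u := s^-1 in hsT *.
have upos : 0 < u by rewrite invr_gt0.
have h1 : A * (s / T1) / 2 <= A * u / 2.
  apply: ler_wpM2r; first lra. exact: ler_wpM2l.
have fin : A * u / 2 + B * u / 2 <= D1 * u.
  rewrite Sb. have : A + (d ^ t)%N%:R <= 2 * D1 by lra.
  nra.
apply: le_trans (lerD h1 (lexx _)) _.
exact: fin.
Qed.
Local Open Scope nat_scope.
Local Open Scope ring_scope.
Lemma Aii_card d t K (i : 'I_d) : #|Aij t K i i| = 0%N.
Proof. rewrite card_sum big1 // => w _; by rewrite inE eqxx. Qed.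

Unset Implicit Arguments.

Theorem lemma4p10 (R : realType) (d : nat) (hd : (2 <= d)%N) (K : nat) :
  exists C : R, forall t : nat, (1 <= t)%N ->
    unif_prob R (close_pair_event d t K) <= C / Num.sqrt (t%:R).
Proof.
exists ((d * d * K.+2 * d)%N%:R) => t ht.
rewrite /unif_prob.
have dpos : (0 : R) < (d ^ t)%N%:R by rewrite ltr0n expn_gt0; case: d hd.
have spos : (0 : R) < Num.sqrt (t%:R) by rewrite sqrtr_gt0 ltr0n.
rewrite ler_pdivrMr //.
set X : R := (K.+2)%:R * ((d ^ t.+1)%N%:R / Num.sqrt (t%:R)).
apply: (@le_trans _ _ ((\sum_(i : 'I_d) \sum_(j : 'I_d) #|Aij t K i j|)%N%:R)).
  rewrite ler_nat. exact: union_bound.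
apply: (@le_trans _ _ (\sum_(i : 'I_d) \sum_(j : 'I_d) X)).
  rewrite natr_sum. apply: ler_sum => i _. rewrite natr_sum. apply: ler_sum => j _.
  case: (eqVneq i j) => [->|hij].
    rewrite Aii_card /X. apply: mulr_ge0 => //. apply: divr_ge0 => //. exact: ltW.
  exact: pair_real.
rewrite !sumr_const !card_ord /X.
rewrite -mulrnA -(mulr_natr _ (d * d)).
rewrite (_ : (d ^ t.+1)%N%:R = d%:R * (d ^ t)%N%:R); last by rewrite expnS natrM.
rewrite (_ : (d * d * K.+2 * d)%N%:R = (d * d)%N%:R * (K.+2)%:R * d%:R); last by rewrite !natrM.
move: spos. move: (d%:R : R) ((d ^ t)%N%:R : R) ((K.+2)%:R : R) (Num.sqrt (t%:R : R)) ((d * d)%N%:R : R) => a b c e f spos.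
rewrite le_eqVlt; apply/orP; left; apply/eqP.
rewrite !mulrA; field. exact: lt0r_neq0.
Qed.
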